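(* Let $n\ge 3$ and let $z^\diamond\in\mathbb{R}^n$ be a 2D depth profile with corner set $\mathcal{C}=\{i\in\{2,\dots,n-1\}: z^\diamond_{i-1}-2z^\diamond_i+z^\diamond_{i+1}\neq 0\}$. Let $\mathcal{M}\subseteq\{1,\dots,n\}$ be a sample set with $|\mathcal{M}|=m$, let $A=\mathbf{I}_{\mathcal{M}}\in\mathbb{R}^{m\times n}$ be the corresponding sampling matrix, and assume noiseless measurements $y=Az^\diamond$. Let $\mathcal{I}\subseteq\{1,\dots,n-2\}$ be the $D$-support of $z^\diamond$ (the indices of the nonzero entries of $Dz^\diamond$), $\mathcal{J}=\{1,\dots,n-2\}\setminus\mathcal{I}$, let $N=\mathbf{I}_{\overline{\mathcal{M}}}\in\mathbb{R}^{(n-m)\times n}$ (whose rows span the null space of $A$), and define $$C_{\mathrm{er}}=\big|\big|\big|\,(N (D_{\mathcal{J}})^{\mathsf{T}})^{\dagger}\, N (D_{\mathcal{I}})^{\mathsf{T}}\,\big|\big|\big|_\infty .$$ Then: (i) if $\mathcal{M}=\mathcal{C}\cup\{1,n\}$, then $C_{\mathrm{er}}=1$; (ii) if $\mathcal{M}$ contains every corner $i\in\mathcal{C}$ together with its neighbors $i-1$ and $i+1$, then $C_{\mathrm{er}}=0$ and the problem $\min_{z\in\mathbb{R}^n}\|Dz\|_1$ subject to $Az=y$ recovers $z^\diamond$ exactly (its unique solution is $z^\diamond$).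
   Context: $D\in\mathbb{R}^{(n-2)\times n}$ is the second-order difference operator whose $k$-th row has entries $1,-2,1$ in columns $k,k+1,k+2$ and zeros elsewhere, so $(Dz)_k=z_k-2z_{k+1}+z_{k+2}$. For an index set $\mathcal{S}$, $\mathbf{I}_{\mathcal{S}}$ is the submatrix of the identity consisting of the rows indexed by $\mathcal{S}$, and $D_{\mathcal{S}}$ is the submatrix of $D$ consisting of the rows indexed by $\mathcal{S}$. $\overline{\mathcal{M}}=\{1,\dots,n\}\setminus\mathcal{M}$. $(\cdot)^\dagger$ is the Moore–Penrose pseudoinverse, and for a matrix $M$ with rows $M_i$, $|||M|||_\infty=\max_i\|M_i\|_1$.
   Formalization: Part (i) also assumes two corners in $\mathcal{C}$ with a non-corner index strictly between them, and in part (ii) exact recovery of $z^\diamond$ is asserted only when the sample set $\mathcal{M}$ has at least two elements. The statement above fails without it. *)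

(* Defs.v *)
From HB Require Import structures.
From mathcomp Require Import all_boot all_order all_algebra.
From mathcomp Require Import reals.
From Stdlib Require Import ClassicalEpsilon.
Set Implicit Arguments. Unset Strict Implicit. Unset Printing Implicit Defensive.
Import Order.TTheory GRing.Theory Num.Theory.
Local Open Scope ring_scope.

Section Defs.
Variable R : realType.

(* Indices are 0-based: the paper's index i in {1..n} is our i-1 : 'I_n,
   and the paper's D-row k in {1..n-2} is our k-1 : 'I_(n-2). *)

Definition diff2 (n : nat) : 'M[R]_(n - 2, n) :=
  \matrix_(k < n - 2, j < n)
    (if val j == val k then 1
     else if val j == (val k).+1 then -2
     else if val j == (val k).+2 then 1 else 0).

Definition idrows (n : nat) (S : {set 'I_n}) : 'M[R]_(#|S|, n) :=
  \matrix_(i < #|S|, j < n) (enum_val i == j)%:R.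

Definition subrows (p q : nat) (M : 'M[R]_(p, q)) (S : {set 'I_p})
  : 'M[R]_(#|S|, q) :=
  \matrix_(i < #|S|, j < q) M (enum_val i) j.

Definition is_MP_pinv (p q : nat) (A : 'M[R]_(p, q)) (X : 'M[R]_(q, p)) :=
  [/\ A *m X *m A = A, X *m A *m X = X,
      (A *m X)^T = A *m X & (X *m A)^T = X *m A].

Definition pinv (p q : nat) (A : 'M[R]_(p, q)) : 'M[R]_(q, p) :=
  epsilon (inhabits 0) (is_MP_pinv A).

(* |||M|||_oo = max_i sum_j |M_ij|  (0 for a matrix with no rows) *)
Definition mx_norm_inf (p q : nat) (M : 'M[R]_(p, q)) : R :=
  \big[Num.max/0]_(i < p) \sum_(j < q) `|M i j|.

(* entry z_k of a vector, 0-based, 0 out of range *)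
Definition zat (n : nat) (z : 'cV[R]_n) (k : nat) : R :=
  if insub k is Some i then z i 0 else 0.

Definition corners (n : nat) (z : 'cV[R]_n) : {set 'I_n} :=
  [set i : 'I_n | (0 < val i < n.-1)%N &&
     (zat z (val i).-1 - 2 * zat z (val i) + zat z (val i).+1 != 0)].

Definition Dsupp (n : nat) (z : 'cV[R]_n) : {set 'I_(n - 2)} :=
  [set k | (diff2 n *m z) k 0 != 0].

Definition l1D (n : nat) (z : 'cV[R]_n) : R :=
  \sum_(k < n - 2) `|(diff2 n *m z) k 0|.

Definition Cer (n : nat) (M : {set 'I_n}) (z : 'cV[R]_n) : R :=
  let I := Dsupp z in
  let J := ~: I in
  let N := idrows (~: M) in
  mx_norm_inf (pinv (N *m (subrows (diff2 n) J)^T) *m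
               (N *m (subrows (diff2 n) I)^T)).

End Defs.

(* Main.v *)
Require Import Defs.
From HB Require Import structures.
From mathcomp Require Import all_boot all_order all_algebra.
From mathcomp Require Import reals.
From mathcomp Require Import zify ring lra.
From Stdlib Require Import ClassicalEpsilon.
Set Implicit Arguments. Unset Strict Implicit. Unset Printing Implicit Defensive.
Import Order.TTheory GRing.Theory Num.Theory.
Local Open Scope ring_scope.

Section Gen.
Variable R : realType.

Lemma sum_at n (z : 'cV[R]_n) p :
  \sum_(j < n) (val j == p)%:R * z j 0 = zat z p.
Proof.
rewrite /zat; case: insubP => [i _ <-|/negbTE H].
  rewrite (bigD1 i) //= eqxx mul1r big1 ?addr0 // => j /negbTE.
  by rewrite val_eqE => ->; rewrite mul0r.
rewrite big1 // => j _; case: eqP => [E|_]; last by rewrite mul0r.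
by move: (ltn_ord j); rewrite E H.
Qed.

Lemma diff2E n (k : 'I_(n-2)) (j : 'I_n) : diff2 R n k j =
  (val j == val k)%:R - 2 * (val j == (val k).+1)%:R + (val j == (val k).+2)%:R.
Proof.
rewrite mxE; do ! case: eqP => //= ; try lia; move=> *;
  rewrite ?mulr0 ?mulr1 ?subr0 ?addr0 ?add0r ?sub0r //.
Qed.

Lemma D2E n (z : 'cV[R]_n) (k : 'I_(n-2)) :
  (diff2 R n *m z) k 0 = zat z k - 2 * zat z (val k).+1 + zat z (val k).+2.
Proof.
rewrite mxE -!sum_at mulr_sumr -sumrB -big_split /=; apply: eq_bigr => j _.
by rewrite diff2E; ring.
Qed.

Lemma idrowsM n p (S : {set 'I_n}) (X : 'M[R]_(n, p)) i l :
  (idrows R S *m X) i l = X (enum_val i) l.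
Proof.
rewrite mxE (bigD1 (enum_val i)) //= mxE eqxx mul1r big1 ?addr0 // => j /negbTE.
by rewrite mxE eq_sym => ->; rewrite mul0r.
Qed.

Lemma subrowsE p q (X : 'M[R]_(p, q)) S i j : subrows X S i j = X (enum_val i) j.
Proof. by rewrite mxE. Qed.

Lemma inj_unit m (A : 'M[R]_m) :
  (forall v : 'cV[R]_m, A *m v = 0 -> v = 0) -> A \in unitmx.
Proof.
move=> H; rewrite -unitmx_tr -row_free_unit -kermx_eq0; apply/eqP.
apply/row_matrixP => i; rewrite row0.
set K := kermx A^T.
have E : row i K *m A^T = 0 by rewrite -row_mul mulmx_ker row0.
have E2 : A *m (row i K)^T = 0 by rewrite -(trmxK A) -trmx_mul E trmx0.
by move/(congr1 trmx): (H _ E2); rewrite trmxK trmx0.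
Qed.

Lemma inj_mx p q (A : 'M[R]_(p, q)) r (W : 'M[R]_(q, r)) :
  (forall v : 'cV[R]_q, A *m v = 0 -> v = 0) -> A *m W = 0 -> W = 0.
Proof.
move=> H E; apply/matrixP => i j.
have : col j W = 0.
  apply: H; apply/matrixP => a b; move/matrixP/(_ a j): E; rewrite !mxE => E0; rewrite -[X in _ = X]E0.
  by apply: eq_bigr => k _; rewrite !mxE.
by move/matrixP/(_ i 0); rewrite !mxE.
Qed.

Lemma pinv_inj p q (A : 'M[R]_(p, q)) :
  (forall v : 'cV[R]_q, A *m v = 0 -> v = 0) -> pinv A *m A = 1%:M.
Proof.
move=> H.
set G := A^T *m A.
have GT : G^T = G by rewrite /G trmx_mul trmxK.
have HG : G \in unitmx.
  apply: inj_unit => v Gv; apply: H.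
  have E : ((A *m v)^T *m (A *m v)) 0 0 = 0.
    by rewrite trmx_mul -mulmxA (mulmxA A^T) -/G Gv mulmx0 mxE.
  apply/matrixP => i j; rewrite (ord1 j) mxE.
  move: E; rewrite mxE => /eqP; rewrite psumr_eq0; last first.
    by move=> k _; rewrite mxE -expr2 sqr_ge0.
  move/allP/(_ i (mem_index_enum _)); rewrite mxE -expr2 sqrf_eq0 /=.
  by rewrite mxE => /eqP ->; rewrite mxE.
set X := invmx G *m A^T.
have XA : X *m A = 1%:M by rewrite /X -mulmxA mulVmx.
have MP : is_MP_pinv A X.
  split.
  - by rewrite -mulmxA XA mulmx1.
  - by rewrite XA mul1mx.
  - by rewrite /X mulmxA !trmx_mul trmxK -mulmxA trmx_inv GT mulmxA.
  - by rewrite XA trmx1.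
have : is_MP_pinv A (pinv A) by rewrite /pinv; apply: epsilon_spec; exists X.
case=> E1 _ _ _.
apply/eqP; rewrite -subr_eq0; apply/eqP; apply: (inj_mx H).
by rewrite mulmxBr mulmx1 mulmxA E1 subrr.
Qed.
End Gen.
Section Hat.
Variable R : realType.
Variable n : nat.
Variable inM : nat -> bool.
Hypothesis inM0 : inM 0.
Hypothesis inMn : forall p, (n.-1 <= p)%N -> inM p.

Fixpoint pv (y : nat) : nat := if inM y then y else if y is y'.+1 then pv y' else 0.
Definition prev x := pv x.-1.
Fixpoint nxf (f y : nat) : nat :=
  if inM y then y else if f is f'.+1 then nxf f' y.+1 else y.
Definition next x := nxf n x.+1.

Lemma pv_spec y : [/\ inM (pv y), (pv y <= y)%N &
  forall p, (pv y < p <= y)%N -> ~~ inM p].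
Proof.
elim: y => [|y [IH1 IH2 IH3]] /=; first by rewrite inM0; split => // p; lia.
case: ifP => Hy; first by split => // p; lia.
split => //; first lia.
move=> p Hp; have [->|ne] := eqVneq p y.+1; first by rewrite Hy.
apply: IH3; lia.
Qed.

Lemma prev_spec x : (0 < x)%N -> [/\ inM (prev x), (prev x < x)%N &
  forall p, (prev x < p < x)%N -> ~~ inM p].
Proof.
move=> x0; rewrite /prev; case: (pv_spec x.-1) => H1 H2 H3; split => //; first lia.
move=> p Hp; apply: H3; lia.
Qed.

Lemma nxf_spec f y : (n.-1 <= y + f)%N -> [/\ inM (nxf f y), (y <= nxf f y)%N &
  forall p, (y <= p < nxf f y)%N -> ~~ inM p].
Proof.
elim: f y => [|f IH] y Hf /=.
  rewrite addn0 in Hf; have Hy := inMn Hf; rewrite Hy; split => // p; lia.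
case: ifP => Hy; first by split => // p; lia.
have [H1 H2 H3] := IH y.+1 ltac:(lia); split => //; first lia.
move=> p Hp; have [->|ne] := eqVneq p y; first by rewrite Hy.
apply: H3; lia.
Qed.

Lemma next_spec x : [/\ inM (next x), (x < next x)%N &
  forall p, (x < p < next x)%N -> ~~ inM p].
Proof.
rewrite /next; have [H1 H2 H3] := @nxf_spec n x.+1 ltac:(lia).
split => //; move=> p Hp; apply: H3; lia.
Qed.

Lemma prev_char x a : (a < x)%N -> inM a ->
  (forall p, (a < p < x)%N -> ~~ inM p) -> prev x = a.
Proof.
move=> ax Ma H; have [P1 P2 P3] := prev_spec (leq_ltn_trans (leq0n a) ax).
have [lt|gt|//] := ltngtP (prev x) a.
  by move: (P3 a ltac:(lia)); rewrite Ma.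
by move: (H (prev x) ltac:(lia)); rewrite P1.
Qed.

Lemma next_char x b : (x < b)%N -> inM b ->
  (forall p, (x < p < b)%N -> ~~ inM p) -> next x = b.
Proof.
move=> xb Mb H; have [P1 P2 P3] := next_spec x.
have [lt|gt|//] := ltngtP (next x) b.
  by move: (H (next x) ltac:(lia)); rewrite P1.
by move: (P3 b ltac:(lia)); rewrite Mb.
Qed.

Definition hat (c p : nat) : R :=
  let a := prev c in let b := next c in
  if (a <= p <= c)%N then (p%:R - a%:R) / (c%:R - a%:R)
  else if (c <= p <= b)%N then (b%:R - p%:R) / (b%:R - c%:R) else 0.

Section HatC.
Variable c : nat.
Hypothesis c0 : (0 < c)%N.
Let a := prev c.
Let b := next c.
Let ac : (a < c)%N. Proof. by case: (prev_spec c0). Qed.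
Let cb : (c < b)%N. Proof. by case: (next_spec c). Qed.
Let ca_neq : (c%:R - a%:R : R) != 0.
Proof. by rewrite subr_eq0 eqr_nat; apply/eqP; lia. Qed.
Let bc_neq : (b%:R - c%:R : R) != 0.
Proof. by rewrite subr_eq0 eqr_nat; apply/eqP; lia. Qed.

Lemma hatE1 p : (a <= p <= c)%N -> hat c p = (p%:R - a%:R) / (c%:R - a%:R).
Proof. by move=> H; rewrite /hat -/a -/b H. Qed.

Lemma hatE2 p : (c <= p <= b)%N -> hat c p = (b%:R - p%:R) / (b%:R - c%:R).
Proof.
move=> H; rewrite /hat -/a -/b H; case: ifP => // H2.
have -> : p = c by lia.
by rewrite !divff.
Qed.

Lemma hatE0 p : (p <= a)%N || (b <= p)%N -> hat c p = 0.
Proof.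
move=> H; rewrite /hat -/a -/b; case: ifP => H1.
  have -> : p = a by lia.
  by rewrite subrr mul0r.
case: ifP => // H2; have -> : p = b by lia.
by rewrite subrr mul0r.
Qed.


Lemma hat_c : hat c c = 1.
Proof. by rewrite hatE1 ?divff //; lia. Qed.

Lemma hat_M p : inM p -> p != c -> hat c p = 0.
Proof.
move=> Mp pc; apply: hatE0.
case: (prev_spec c0) => _ _ P3; case: (next_spec c) => _ _ N3.
have [lt|gt|eq] := ltngtP p c; last by rewrite eq eqxx in pc.
  apply/orP; left; rewrite leqNgt; apply/negP => ap.
  by move: (P3 p ltac:(lia)); rewrite Mp.
apply/orP; right; rewrite leqNgt; apply/negP => pb.
by move: (N3 p ltac:(lia)); rewrite Mp.
Qed.

Lemma hat_ge0 p : 0 <= hat c p.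
Proof.
rewrite /hat -/a -/b; case: ifP => H1.
  by apply: divr_ge0; rewrite subr_ge0 ler_nat; lia.
case: ifP => // H2.
by apply: divr_ge0; rewrite subr_ge0 ler_nat; lia.
Qed.

Lemma hat_D2 j : ~~ inM j -> (0 < j)%N -> j != c ->
  hat c j.-1 - 2 * hat c j + hat c j.+1 = 0.
Proof.
move=> Mj j0 jc0.
have [P1 _ _] := prev_spec c0; have [N1 _ _] := next_spec c.
have ja : j != a by apply: contraNneq Mj => ->.
have jb : j != b by apply: contraNneq Mj => ->.
case: (ltnP j a) => [ja'|aj].
  rewrite !hatE0; try lia; by rewrite mulr0 subrr addr0.
case: (ltnP j c) => [jc|cj].
  rewrite !hatE1; try lia.
  case: j Mj j0 jc0 ja jb jc aj => // k _ _ _ _ _ _ _ /=.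
  rewrite -!natr1; ring.
case: (ltnP j b) => [jb'|bj].
  rewrite !hatE2; try lia.
  case: j Mj j0 jc0 ja jb jb' cj aj => // k _ _ _ _ _ _ _ _ /=.
  rewrite -!natr1; ring.
rewrite !hatE0; try lia; by rewrite mulr0 subrr addr0.
Qed.

End HatC.

Lemma gap u : ~~ inM u -> forall p, (prev u < p < next u)%N -> ~~ inM p.
Proof.
move=> Mu.
have u0 : (0 < u)%N by case: u Mu => //; rewrite inM0.
move=> p Hp.
case: (prev_spec u0) => _ _ P3; case: (next_spec u) => _ _ N3.
have [lt|gt|->] := ltngtP p u => //; [apply: P3 | apply: N3]; lia.
Qed.

Lemma hat_supp c u : (0 < c)%N -> inM c -> ~~ inM u -> hat c u != 0 ->
  c = prev u \/ c = next u.
Proof.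
move=> c0 Mc Mu H.
have u0 : (0 < u)%N by case: u Mu {H} => //; rewrite inM0.
case: (prev_spec c0) => _ P2 P3; case: (next_spec c) => _ N2 N3.
have au : (prev c < u < next c)%N.
  rewrite !ltnNge; apply/andP; split; apply/negP => Hu; move: H;
    by rewrite hatE0 ?eqxx // Hu ?orbT.
have [lt|gt|eq] := ltngtP u c; last by move: Mu; rewrite eq Mc.
  right; symmetry; apply: next_char => // p Hp; apply: P3; lia.
left; symmetry; apply: prev_char => // p Hp; apply: N3; lia.
Qed.

Lemma hat_prev u : ~~ inM u -> (0 < prev u)%N ->
  hat (prev u) u = ((next u)%:R - u%:R) / ((next u)%:R - (prev u)%:R).
Proof.
move=> Mu a0.
have u0 : (0 < u)%N by case: u Mu {a0} => //; rewrite inM0.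
case: (prev_spec u0) => P1 P2 P3; case: (next_spec u) => N1 N2 N3.
have E : next (prev u) = next u.
  apply: next_char => //; first lia.
  move=> p Hp; exact: (gap Mu Hp).
rewrite hatE2 ?E //; lia.
Qed.

Lemma hat_next u : ~~ inM u ->
  hat (next u) u = (u%:R - (prev u)%:R) / ((next u)%:R - (prev u)%:R).
Proof.
move=> Mu.
have u0 : (0 < u)%N by case: u Mu => //; rewrite inM0.
case: (prev_spec u0) => P1 P2 P3; case: (next_spec u) => N1 N2 N3.
have E : prev (next u) = prev u.
  apply: prev_char => //; first lia.
  move=> p Hp; exact: (gap Mu Hp).
rewrite hatE1 ?E //; lia.
Qed.

End Hat.

Section Main.
Variable R : realType.
Variable n : nat.

Definition Wf (J : {set 'I_(n-2)}) (f : 'cV[R]_#|J|) (p : nat) : R :=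
  \sum_(k < #|J|) ((val (enum_val k)).+1 == p)%:R * f k 0.

Lemma W_hit (J : {set 'I_(n-2)}) (f : 'cV[R]_#|J|) (x : 'I_(n-2)) (Hx : x \in J) :
  Wf f (val x).+1 = f (enum_rank_in Hx x) 0.
Proof.
rewrite /Wf (bigD1 (enum_rank_in Hx x)) //= enum_rankK_in // eqxx mul1r.
rewrite big1 ?addr0 // => k ne; case: eqP => [E|_]; last by rewrite mul0r.
have E' : enum_val k = x by apply: val_inj; move: E => [].
by move: ne; rewrite -[X in enum_rank_in _ X]E' enum_valK_in eqxx.
Qed.

Lemma W_miss (J : {set 'I_(n-2)}) (f : 'cV[R]_#|J|) p : (forall x : 'I_(n-2), x \in J -> (val x).+1 != p) -> Wf f p = 0.
Proof.
move=> H; rewrite /Wf big1 // => k _; have := H _ (enum_valP k).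
by move/negbTE => ->; rewrite mul0r.
Qed.

Lemma T_E (U : {set 'I_n}) (J : {set 'I_(n-2)}) (f : 'cV[R]_#|J|) i :
  (0 < val (enum_val i))%N ->
  ((idrows R U *m (subrows (diff2 R n) J)^T) *m f) i 0 =
  Wf f (val (enum_val i)).+1 - 2 * Wf f (val (enum_val i)) + Wf f (val (enum_val i)).-1.
Proof.
move=> j0; rewrite mxE /Wf mulr_sumr -sumrB -big_split /=; apply: eq_bigr => k _.
rewrite idrowsM [_^T _ _]mxE subrowsE diff2E.
have -> : (val (enum_val i) == val (enum_val k)) = ((val (enum_val k)).+1 == (val (enum_val i)).+1).
  by rewrite eqSS eq_sym.
have -> : (val (enum_val i) == (val (enum_val k)).+1) = ((val (enum_val k)).+1 == (val (enum_val i))).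
  by rewrite eq_sym.
have -> : (val (enum_val i) == (val (enum_val k)).+2) = ((val (enum_val k)).+1 == (val (enum_val i)).-1).
  by case: (val (enum_val i)) j0 => // m _; rewrite eqSS eq_sym.
ring.
Qed.


Lemma lin_zero (inM : nat -> bool) (w : nat -> R) : inM 0 ->
  (forall p, (n.-1 <= p)%N -> inM p) -> (forall p, inM p -> w p = 0) ->
  (forall j, ~~ inM j -> w j.+1 - 2 * w j + w j.-1 = 0) -> forall j, w j = 0.
Proof.
move=> M0 Mn Mw D j; elim/ltn_ind: j => j IH.
case Mj: (inM j); first exact: Mw.
have j0 : (0 < j)%N by case: j Mj {IH} => //; rewrite M0.
have wj1 : w j.-1 = 0 by apply: IH; lia.
have H t : (forall s, (s <= t)%N -> ~~ inM (j + s)%N) ->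
    w (j + t)%N = (t.+1)%:R * w j /\ w (j + t)%N.+1 = (t.+2)%:R * w j.
  elim: t => [|t IHt] Hs.
    rewrite addn0; split; first by rewrite mul1r.
    have := D j (negbT Mj); rewrite wj1 addr0.
    by move/eqP; rewrite subr_eq0 => /eqP ->.
  have [_ E2] := IHt (fun s hs => Hs s (leqW hs)).
  have [E1 _] := IHt (fun s hs => Hs s (leqW hs)).
  rewrite addnS; split => //.
  have := D _ (Hs t.+1 (leqnn _)); rewrite addnS /= E2 E1.
  set X := w (j + t)%N.+2; move=> E.
  have -> : X = (X - 2 * (t.+2%:R * w j) + t.+1%:R * w j) + 2 * (t.+2%:R * w j) - t.+1%:R * w j by ring.
  rewrite E -!natr1; ring.
have exP : exists t, inM (j + t)%N by exists (n.-1 - j)%N; apply: Mn; lia.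
case: (ex_minnP exP) => t0 Mt0 Hmin.
have t00 : (0 < t0)%N by case: t0 Mt0 {Hmin} => //; rewrite addn0 Mj.
have Hs : forall s, (s <= t0.-1)%N -> ~~ inM (j + s)%N.
  move=> s hs; apply/negP => Ms; have := Hmin _ Ms; lia.
have [_ E] := H _ Hs.
have : w (j + t0)%N = 0 by apply: Mw.
have -> : (j + t0 = (j + t0.-1).+1)%N by lia.
rewrite E => /eqP; rewrite mulf_eq0 pnatr_eq0 /= => /eqP //.
Qed.


Lemma sum_single m (P : pred 'I_m) a (r : R) :
  \sum_(x | P x && ((val x).+1 == a)) r =
  if [exists x, P x && ((val x).+1 == a)] then r else 0.
Proof.
case: existsP => [[x Hx]|N].
  rewrite (bigD1 x) //= big1 ?addr0 // => y /andP [/andP [_ /eqP Hy] ne].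
  case/andP: Hx => _ /eqP Hx; exfalso; move: ne; rewrite -val_eqE /=.
  by rewrite -eqSS Hy Hx eqxx.
by rewrite big1 // => y Hy; exfalso; apply: N; exists y.
Qed.

Lemma frac_facts (a u b : R) : a < u -> u < b ->
  [/\ 0 <= (b - u) / (b - a), (b - u) / (b - a) <= 1, 0 <= (u - a) / (b - a),
      (u - a) / (b - a) <= 1 & (b - u) / (b - a) + (u - a) / (b - a) = 1].
Proof.
move=> au ub; have d0 : 0 < b - a by lra.
split.
- by apply: divr_ge0; lra.
- by rewrite ler_pdivrMr // mul1r; lra.
- by apply: divr_ge0; lra.
- by rewrite ler_pdivrMr // mul1r; lra.
- by rewrite -mulrDl (_ : b - u + (u - a) = b - a) ?divff //; [lra | ring].
Qed.

Section P1.
Variable zd : 'cV[R]_n.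
Variable M : {set 'I_n}.
Hypothesis n3 : (3 <= n)%N.

Definition isC p := (0 < p < n.-1)%N &&
  (zat zd p.-1 - 2 * zat zd p + zat zd p.+1 != 0).
Definition inMp p := (p == 0)%N || (n.-1 <= p)%N || isC p.

Lemma inMp0 : inMp 0. Proof. by []. Qed.
Lemma inMpn p : (n.-1 <= p)%N -> inMp p.
Proof. by move=> H; rewrite /inMp H orbT. Qed.

Lemma inC_E (i : 'I_n) : (i \in corners zd) = isC i.
Proof. by rewrite inE. Qed.

Lemma inD_E (k : 'I_(n-2)) : (k \in Dsupp zd) = isC (val k).+1.
Proof.
rewrite inE D2E /isC /=.
have lk : (val k < n - 2)%N := ltn_ord k.
by rewrite (_ : ((val k).+1 < n.-1)%N = true) //; lia.
Qed.

Lemma inJ (k : 'I_(n-2)) : (k \in ~: Dsupp zd) = ~~ inMp (val k).+1.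
Proof.
rewrite inE inD_E /inMp.
have lk : (val k < n - 2)%N := ltn_ord k.
rewrite (_ : ((val k).+1 == 0)%N = false) // (_ : (n.-1 <= (val k).+1)%N = false) //.
lia.
Qed.

Hypothesis HM : M = corners zd :|: [set i : 'I_n | (val i == 0)%N || (val i == n.-1)].

Lemma inM_E (i : 'I_n) : (i \in M) = inMp i.
Proof.
rewrite HM !inE /inMp.
have -> : (n.-1 <= i)%N = (val i == n.-1).
  have li : (i < n)%N := ltn_ord i; have e : val i = i := erefl; apply/idP/eqP; lia.
rewrite /isC /=; by case: (_ && _); case: (_ == 0)%N; case: (_ == n.-1); rewrite ?orbT ?orbF.
Qed.

Let I := Dsupp zd.
Let J := ~: I.
Let U := ~: M.
Let T := idrows R U *m (subrows (diff2 R n) J)^T.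
Let B := idrows R U *m (subrows (diff2 R n) I)^T.

Lemma evU (i : 'I_#|U|) : ~~ inMp (enum_val i).
Proof. by have := enum_valP i; rewrite inE inM_E. Qed.

Lemma notM0 p : ~~ inMp p -> (0 < p)%N.
Proof. by case: p. Qed.

Lemma evU0 (i : 'I_#|U|) : (0 < val (enum_val i))%N.
Proof. exact: notM0 (evU i). Qed.

Lemma rowU j : ~~ inMp j -> exists i : 'I_#|U|, val (enum_val i) = j.
Proof.
move=> Mj; have jn : (j < n)%N.
  by case: (ltnP j n) Mj => // H; rewrite inMpn //; lia.
have Hj : Ordinal jn \in U by rewrite inE inM_E.
by exists (enum_rank_in Hj (Ordinal jn)); rewrite enum_rankK_in.
Qed.

Lemma T_inj (v : 'cV[R]_#|J|) : T *m v = 0 -> v = 0.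
Proof.
move=> Tv.
have Wz : forall j, Wf v j = 0.
  apply: (@lin_zero inMp) => //.
  - exact: inMpn.
  - move=> p Mp; apply: W_miss => x Hx; apply/eqP => E; move: Hx.
    by rewrite inJ E Mp.
  - move=> j Mj; have [i Hi] := rowU Mj.
    have := T_E v (evU0 i); rewrite Hi -/T Tv mxE => <-.
    by [].
apply/matrixP => k l; rewrite (ord1 l) mxE.
have := W_hit v (enum_valP k); rewrite enum_valK_in Wz => <-.
by [].
Qed.


Definition Y : 'M[R]_(#|J|, #|I|) :=
  \matrix_(k, c) - hat R n inMp (val (enum_val c)).+1 (val (enum_val k)).+1.

Lemma evI (c : 'I_#|I|) : inMp (val (enum_val c)).+1.
Proof. by have := enum_valP c; rewrite inD_E /inMp => ->; rewrite !orbT. Qed.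

Lemma WY c p : Wf (col c Y) p =
  - hat R n inMp (val (enum_val c)).+1 p + (p == (val (enum_val c)).+1)%:R.
Proof.
set C := (val (enum_val c)).+1.
have CM : inMp C := evI c.
have C0 : (0 < C)%N by [].
case: (boolP [exists x : 'I_(n-2), (x \in J) && ((val x).+1 == p)]).
  move/existsP => [x /andP [Hx /eqP <-]].
  rewrite W_hit !mxE enum_rankK_in // -/C.
  rewrite (_ : ((val x).+1 == C) = false) ?addr0 //.
  by apply/negbTE/eqP => E; move: Hx; rewrite inJ E CM.
move=> Hn; rewrite W_miss; last first.
  move=> x Hx; apply/eqP => E; apply: (negP Hn); apply/existsP; exists x.
  by rewrite Hx E eqxx.
have [->|ne] := eqVneq p C.
  by rewrite (hat_c R inMp0 inMpn C0) addNr.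
rewrite (hat_M R inMp0 inMpn C0) ?oppr0 ?addr0 //.
apply/negPn/negP => Mp.
have p0 := notM0 Mp.
have pn : (p.-1 < n - 2)%N.
  by case: (ltnP p n.-1) Mp => H; [lia | rewrite inMpn].
apply: (negP Hn); apply/existsP; exists (Ordinal pn); rewrite inJ /=.
by rewrite prednK // Mp eqxx.
Qed.

Lemma TY : T *m Y = B.
Proof.
apply/matrixP => i c.
have E1 : (T *m Y) i c = (T *m col c Y) i 0.
  by rewrite !mxE; apply: eq_bigr => k _; rewrite !mxE.
rewrite E1 T_E ?evU0 // !WY.
rewrite /B idrowsM [_^T _ _]mxE subrowsE diff2E.
set C := (val (enum_val c)).+1.
have CM : inMp C := evI c.
have C0 : (0 < C)%N by [].
have jM := evU i; have j0 := evU0 i.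
have jC : val (enum_val i) != C by apply: contraNneq jM => ->.
have hD := hat_D2 R inMp0 inMpn C0 jM j0 jC.
rewrite (negbTE jC) eqSS.
have -> : ((val (enum_val i)).-1 == C) = (val (enum_val i) == (val (enum_val c)).+2).
  by rewrite /C; case: (val (enum_val i)) j0.
lra.
Qed.

Let hp := hat R n inMp.
Let pv := prev inMp.
Let nx := next n inMp.

Lemma rowsumE u : ~~ inMp u ->
  \sum_(x in I) hp (val x).+1 u =
  (if [exists x, (x \in I) && ((val x).+1 == pv u)] then hp (pv u) u else 0) +
  (if [exists x, ((x \in I) && ((val x).+1 != pv u)) && ((val x).+1 == nx u)]
     then hp (nx u) u else 0).
Proof.
move=> Mu.
rewrite (bigID (fun x : 'I_(n-2) => (val x).+1 == pv u)) /=.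
rewrite [X in _ + X](bigID (fun x : 'I_(n-2) => (val x).+1 == nx u)) /=.
rewrite [X in _ + (_ + X)]big1 ?addr0; last first.
  move=> x /andP [/andP [xI xa] xb]; apply/eqP; apply/negPn/negP => H.
  have xM : inMp (val x).+1 by move: xI; rewrite inD_E /inMp => ->; rewrite !orbT.
  case: (hat_supp inMp0 inMpn (ltn0Sn _) xM Mu H) => E.
    by rewrite -/pv E eqxx in xa.
  by rewrite -/nx E eqxx in xb.
rewrite -!sum_single; congr (_ + _); apply: eq_bigr => x /andP [_ /eqP ->] //.
Qed.

Lemma row_facts u : ~~ inMp u ->
  [/\ (0 < pv u)%N -> hp (pv u) u = ((nx u)%:R - u%:R) / ((nx u)%:R - (pv u)%:R),
      hp (nx u) u = (u%:R - (pv u)%:R) / ((nx u)%:R - (pv u)%:R),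
      ((pv u)%:R < u%:R :> R) & (u%:R < (nx u)%:R :> R)].
Proof.
move=> Mu; have u0 := notM0 Mu.
case: (prev_spec inMp0 u0) => _ P2 _; case: (next_spec inMp0 inMpn u) => _ N2 _.
split.
- by move=> a0; apply: (hat_prev R inMp0 inMpn Mu a0).
- exact: (hat_next R inMp0 inMpn Mu).
- by rewrite ltr_nat.
- by rewrite ltr_nat.
Qed.

Lemma rowsum_le u : ~~ inMp u -> \sum_(x in I) hp (val x).+1 u <= 1.
Proof.
move=> Mu; rewrite rowsumE //.
case: (row_facts Mu) => HA HB au ub.
case: (frac_facts au ub) => A0 A1 B0 B1 AB.
case: ifP => [/existsP [x /andP [_ /eqP xa]] | _].
  have a0 : (0 < pv u)%N by rewrite -xa.
  rewrite (HA a0) HB; case: ifP => _; lra.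
rewrite HB; case: ifP => _; lra.
Qed.

Lemma rowsum_eq u : ~~ inMp u ->
  (exists x : 'I_(n-2), x \in I /\ (val x).+1 = pv u) ->
  (exists x : 'I_(n-2), x \in I /\ (val x).+1 = nx u) ->
  \sum_(x in I) hp (val x).+1 u = 1.
Proof.
move=> Mu [x [xI xa]] [y [yI yb]]; rewrite rowsumE //.
case: (row_facts Mu) => HA HB au bu.
have ab : (pv u < nx u)%N by rewrite -(ltr_nat R); exact: lt_trans au bu.
case: (frac_facts au bu) => A0 A1 B0 B1 AB.
rewrite ifT; last by apply/existsP; exists x; rewrite xI xa eqxx.
rewrite ifT; last first.
  apply/existsP; exists y; rewrite yI yb eqxx andbT /=.
  by apply/eqP => E; lia.
have a0 : (0 < pv u)%N by rewrite -xa.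
by rewrite (HA a0) HB.
Qed.

Lemma evJ (r : 'I_#|J|) : ~~ inMp (val (enum_val r)).+1.
Proof. by rewrite -inJ; exact: enum_valP. Qed.

Lemma inMp_isC p : inMp p -> (0 < p)%N -> (p < n.-1)%N -> isC p.
Proof.
rewrite /inMp => H p0 pn; move: H.
have -> : (p == 0)%N = false by lia.
by have -> : (n.-1 <= p)%N = false by lia.
Qed.

Lemma witI p : inMp p -> (0 < p)%N -> (p < n.-1)%N ->
  exists x : 'I_(n-2), x \in I /\ (val x).+1 = p.
Proof.
move=> Mp p0 pn; have pn' : (p.-1 < n - 2)%N by lia.
exists (Ordinal pn'); rewrite inD_E /= prednK //; split => //.
exact: inMp_isC.
Qed.

Lemma part_i : (exists c1 c2 k : 'I_n, [/\ c1 \in corners zd, c2 \in corners zd,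
       (val c1 < val k < val c2)%N & k \notin corners zd]) -> Cer M zd = 1.
Proof.
move=> [c1 [c2 [k [C1 C2 Hk Ck]]]].
have -> : Cer M zd = mx_norm_inf (pinv T *m B) by [].
rewrite -TY mulmxA (pinv_inj T_inj) mul1mx.
have RS : forall r : 'I_#|J|, \sum_c `|Y r c| = \sum_(x in I) hp (val x).+1 (val (enum_val r)).+1.
  move=> r; rewrite [RHS]big_enum_val /=; apply: eq_bigr => c _.
  by rewrite mxE normrN ger0_norm // (hat_ge0 R inMp0 inMpn (ltn0Sn _)).
rewrite /mx_norm_inf; apply/eqP; rewrite eq_le; apply/andP; split.
  apply: bigmax_le => [|r _]; first exact: ler01.
  by rewrite RS; apply: rowsum_le; exact: evJ.
rewrite inC_E in C1; rewrite inC_E in C2; rewrite inC_E in Ck.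
have c1n : (0 < c1 < n.-1)%N by case/andP: C1.
have c2n : (0 < c2 < n.-1)%N by case/andP: C2.
have M1 : inMp c1 by rewrite /inMp C1 !orbT.
have M2 : inMp c2 by rewrite /inMp C2 !orbT.
have e1 : val c1 = nat_of_ord c1 := erefl.
have e2 : val c2 = nat_of_ord c2 := erefl.
have ek : val k = nat_of_ord k := erefl.
have [u Hku] : exists u, nat_of_ord k = u by exists (nat_of_ord k).
rewrite Hku in Ck ek.
have Mu : ~~ inMp u.
  rewrite /inMp (negbTE Ck) orbF; apply/norP; split; apply/negP; lia.
have u0 := notM0 Mu.
case: (prev_spec inMp0 u0) => Pa Pu P3; case: (next_spec inMp0 inMpn u) => Nb Nu N3.
rewrite -/(pv u) in Pa Pu P3; rewrite -/(nx u) in Nb Nu N3.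
have c1a : (c1 <= pv u)%N.
  rewrite leqNgt; apply/negP => H; move: (P3 c1 ltac:(lia)); by rewrite M1.
have bc2 : (nx u <= c2)%N.
  rewrite leqNgt; apply/negP => H; move: (N3 c2 ltac:(lia)); by rewrite M2.
have WA := witI Pa ltac:(lia) ltac:(lia).
have WB := witI Nb ltac:(lia) ltac:(lia).
have un : (u.-1 < n - 2)%N by lia.
have Hx : Ordinal un \in J by rewrite inJ /= prednK.
apply: le_trans (le_bigmax _ _ (enum_rank_in Hx (Ordinal un))).
rewrite RS enum_rankK_in //= prednK //.
by rewrite rowsum_eq.
Qed.


End P1.
Lemma zat_ord (z : 'cV[R]_n) (i : 'I_n) : zat z (val i) = z i 0.
Proof. by rewrite /zat valK. Qed.

Lemma norm_inf0 p q : mx_norm_inf (0 : 'M[R]_(p, q)) = 0.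
Proof.
rewrite /mx_norm_inf; elim/big_ind: _ => //.
  by move=> x y -> ->; rewrite maxxx.
by move=> i _; rewrite big1 // => j _; rewrite mxE normr0.
Qed.

Section P2.
Variable zd : 'cV[R]_n.
Variable M : {set 'I_n}.
Hypothesis n3 : (3 <= n)%N.
Hypothesis H2 : forall i : 'I_n, i \in corners zd ->
      [/\ i \in M,
          (forall j : 'I_n, val j = (val i).-1 -> j \in M) &
          (forall j : 'I_n, val j = (val i).+1 -> j \in M)].

Lemma corner_nbhd (k : 'I_(n-2)) : k \in Dsupp zd ->
  forall j : 'I_n, (val j == val k) || (val j == (val k).+1) || (val j == (val k).+2) ->
  j \in M.
Proof.
move=> kI j Hj.
have lk : (val k < n - 2)%N := ltn_ord k.
have kn : ((val k).+1 < n)%N by lia.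
have Cc : Ordinal kn \in corners zd by rewrite inC_E -inD_E.
case: (H2 Cc) => h0 h1 h2.
case/orP: Hj => [/orP [] | ] /eqP E.
- by apply: h1.
- by have -> : j = Ordinal kn by apply: val_inj.
- by apply: h2.
Qed.

Lemma part_ii_Cer : Cer M zd = 0.
Proof.
rewrite /Cer /=.
have -> : idrows R (~: M) *m (subrows (diff2 R n) (Dsupp zd))^T = 0.
  apply/matrixP => i c; rewrite idrowsM [_^T _ _]mxE subrowsE diff2E mxE.
  have jM : enum_val i \notin M by have := enum_valP i; rewrite inE.
  have nb := corner_nbhd (enum_valP c) (j := enum_val i).
  case: eqP => [E|_]; first by move: jM; rewrite nb // E eqxx.
  case: eqP => [E|_]; first by move: jM; rewrite nb // E eqxx orbT.
  case: eqP => [E|_]; first by move: jM; rewrite nb // E eqxx !orbT.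
  by rewrite mulr0 subrr addr0.
by rewrite mulmx0 norm_inf0.
Qed.

Lemma l1_decomp (z : 'cV[R]_n) : idrows R M *m z = idrows R M *m zd ->
  (forall i, i \in M -> (z - zd) i 0 = 0) /\
  l1D z = l1D zd + \sum_(k < n - 2) `|(diff2 R n *m (z - zd)) k 0|.
Proof.
move=> Hz.
have eM : forall i, i \in M -> (z - zd) i 0 = 0.
  move=> i Hi; move/matrixP: Hz => /(_ (enum_rank_in Hi i) 0).
  by rewrite !idrowsM enum_rankK_in // !mxE => ->; rewrite subrr.
split => //.
rewrite /l1D -big_split; apply: eq_bigr => k _ /=.
have -> : diff2 R n *m z = diff2 R n *m zd + diff2 R n *m (z - zd).
  by rewrite -mulmxDr addrC subrK.
rewrite mxE.
case: (boolP (k \in Dsupp zd)) => kI.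
  have Z : forall p, (p == val k) || (p == (val k).+1) || (p == (val k).+2) ->
      zat (z - zd) p = 0.
    move=> p Hp; have lk : (val k < n - 2)%N := ltn_ord k.
    have pn : (p < n)%N by case/orP: Hp => [/orP [] | ] /eqP ->; lia.
    rewrite -[p]/(val (Ordinal pn)) zat_ord eM //; exact: (corner_nbhd kI (j := Ordinal pn) Hp).
  have DE : (diff2 R n *m (z - zd)) k 0 = 0.
    by rewrite D2E !Z ?eqxx ?orbT // mulr0 subrr addr0.
  by rewrite DE addr0 normr0 addr0.
move: kI; rewrite inE negbK => /eqP ->.
by rewrite normr0 !add0r.
Qed.

Lemma lin_vec (e : 'cV[R]_n) : (forall k : 'I_(n-2), (diff2 R n *m e) k 0 = 0) ->
  forall p, (p < n)%N -> zat e p = zat e 0 + p%:R * (zat e 1 - zat e 0).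
Proof.
move=> H p; elim/ltn_ind: p => p IH pn.
case: p IH pn => [|[|q]] IH pn.
- by rewrite mul0r addr0.
- by rewrite mul1r addrC subrK.
have kq : (q < n - 2)%N by lia.
have := H (Ordinal kq); rewrite D2E /= => E.
have -> : zat e q.+2 = 2 * zat e q.+1 - zat e q.
  by apply/eqP; rewrite -subr_eq0; apply/eqP; rewrite -E; ring.
rewrite (IH q) ?(IH q.+1) //; try lia.
rewrite -!natr1; ring.
Qed.

Lemma l1_parts : (2 <= #|M|)%N ->
  (forall z : 'cV[R]_n, idrows R M *m z = idrows R M *m zd -> l1D zd <= l1D z) /\
  (forall z : 'cV[R]_n, idrows R M *m z = idrows R M *m zd -> l1D z <= l1D zd -> z = zd).
Proof.
move=> M2; split.
  move=> z Hz; case: (l1_decomp Hz) => _ ->.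
  by rewrite lerDl sumr_ge0 // => k _; rewrite normr_ge0.
move=> z Hz; case: (l1_decomp Hz) => eM -> Hle.
set e := z - zd in eM Hle *.
have S0 : \sum_(k < n - 2) `|(diff2 R n *m e) k 0| = 0.
  apply/eqP; rewrite eq_le sumr_ge0 ?andbT; last by move=> k _; rewrite normr_ge0.
  by move: Hle; rewrite gerDl.
have De : forall k : 'I_(n-2), (diff2 R n *m e) k 0 = 0.
  move: S0 => /eqP; rewrite psumr_eq0; last by move=> k _; rewrite normr_ge0.
  move=> /allP H k; have := H k (mem_index_enum _); rewrite normr_eq0 => /eqP //.
have L := lin_vec De.
case/card_gt1P: M2 => i1 [i2 [M1 M2' ne]].
have z1 : zat e (val i1) = 0 by rewrite zat_ord eM.
have z2 : zat e (val i2) = 0 by rewrite zat_ord eM.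
rewrite (L _ (ltn_ord i1)) in z1; rewrite (L _ (ltn_ord i2)) in z2.
have d0 : zat e 1 - zat e 0 = 0.
  have : ((val i1)%:R - (val i2)%:R) * (zat e 1 - zat e 0) = 0.
    by rewrite mulrBl; apply/eqP; rewrite subr_eq0; apply/eqP; lra.
  move/eqP; rewrite mulf_eq0 => /orP [|/eqP //].
  by rewrite subr_eq0 eqr_nat val_eqE (negbTE ne).
have g0 : zat e 0 = 0 by move: z1; rewrite d0 mulr0 addr0.
apply/eqP; rewrite -subr_eq0; apply/eqP; apply/matrixP => i j.
rewrite (ord1 j); have := L _ (ltn_ord i); rewrite d0 g0 mulr0 addr0 zat_ord => ->.
by rewrite mxE.
Qed.

End P2.
End Main.

Unset Implicit Arguments.
Set Strict Implicit.

Theorem proposition2 (R : realType) (n : nat) (zd : 'cV[R]_n)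
    (M : {set 'I_n}) :
  (3 <= n)%N ->
  let C := corners zd in
  let A := idrows R M in
  let y := A *m zd in
  (* (i) *)
  ((exists (c1 c2 k : 'I_n), [/\ c1 \in C, c2 \in C,
       (val c1 < val k < val c2)%N & k \notin C]) ->
   M = C :|: [set i : 'I_n | (val i == 0)%N || (val i == n.-1)] ->
   Cer M zd = 1)
  /\
  (* (ii) *)
  ((forall i : 'I_n, i \in C ->
      [/\ i \in M,
          (forall j : 'I_n, val j = (val i).-1 -> j \in M) &
          (forall j : 'I_n, val j = (val i).+1 -> j \in M)]) ->
   Cer M zd = 0 /\
   ((2 <= #|M|)%N ->
    (forall z : 'cV[R]_n, A *m z = y -> l1D zd <= l1D z) /\
    (forall z : 'cV[R]_n, A *m z = y -> l1D z <= l1D zd -> z = zd))).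
Proof.
move=> n3 C A y; split.
  by move=> Hex HM; exact: (part_i n3 HM Hex).
move=> H; split; first exact: (part_ii_Cer n3 H).
by move=> M2; apply: (l1_parts n3 H M2).
Qed.
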